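(* Consider equation (E). Assume that for every $i=1,\dots,m$, $$\liminf_{t\to+\infty}\int_{\tau_i(t)}^{t}p_i(s)\,ds=\beta_i\in\Big(0,\frac1e\Big],$$ and let $\lambda_i^{*}$ be the smallest real root of $e^{\beta_i\lambda}=\lambda$. Assume there exist continuous non-decreasing functions $\sigma_1,\dots,\sigma_m:[t_0,\infty)\to\mathbb{R}$ with $\tau_i(t)\le\sigma_i(t)\le t$ for $t\ge t_0$, $i=1,\dots,m$, such that $$\limsup_{\varepsilon\to0+}\Bigg(\limsup_{t\to+\infty}\prod_{j=1}^{m}\bigg(\prod_{i=1}^{m}\int_{\sigma_j(t)}^{t}p_i(s)\exp\Big(\int_{\tau_i(s)}^{\sigma_i(t)}\sum_{k=1}^{m}(\lambda_k^{*}-\varepsilon)\,p_k(\xi)\,d\xi\Big)ds\bigg)^{1/m}\Bigg)>\frac{1}{m^{m}}.$$ Then all solutions of (E) oscillate.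
   Context: Equation (E) is $x'(t)+\sum_{i=1}^{m}p_i(t)\,x(\tau_i(t))=0$, $t\ge t_0$, where $m\ge1$ is an integer and, for each $i$, $p_i,\tau_i:[t_0,\infty)\to[0,\infty)$ are continuous, $\tau_i(t)\le t$ for $t\ge t_0$, and $\lim_{t\to\infty}\tau_i(t)=\infty$. Let $\tau(t)=\min_i\tau_i(t)$ and $\tau_{(-1)}(t)=\sup\{s:\tau(s)\le t\}$. A solution of (E) is a function $x\in C([T_0,\infty);\mathbb{R})$ for some $T_0\ge t_0$ which is continuously differentiable on $[\tau_{(-1)}(T_0),\infty)$ and satisfies (E) for $t\ge\tau_{(-1)}(T_0)$. A solution is oscillatory if it has arbitrarily large zeros; ''all solutions oscillate'' means every solution is oscillatory. *)

(* Defs.v *)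
From Stdlib Require Import Reals ClassicalEpsilon.
Open Scope R_scope.

(* Oriented Riemann integral \int_a^b f (a value; 0 if f is not Riemann
   integrable between a and b -- never the case for the continuous
   integrands of the paper).  RiemannInt does not depend on the proof. *)
Definition Rint (f : R -> R) (a b : R) : R :=
  match excluded_middle_informative (inhabited (Riemann_integrable f a b)) with
  | left h => RiemannInt (epsilon h (fun _ => True))
  | right _ => 0
  end.

(* sumR m f = f 0 + ... + f (m-1);  prodR m f = f 0 * ... * f (m-1).
   Indices i = 1..m of the paper are 0..m-1 here. *)
Fixpoint sumR (m : nat) (f : nat -> R) : R :=
  match m with O => 0 | S k => sumR k f + f k end.
Fixpoint prodR (m : nat) (f : nat -> R) : R :=
  match m with O => 1 | S k => prodR k f * f k end.

Fixpoint minR (n : nat) (f : nat -> R) : R :=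
  match n with O => f O | S k => Rmin (minR k f) (f (S k)) end.

Definition tau_min (m : nat) (tau : nat -> R -> R) (t : R) : R :=
  minR (m - 1) (fun i => tau i t).

Definition rootR (m : nat) (x : R) : R :=
  if Rle_dec x 0 then 0 else Rpower x (/ INR m).

Definition liminf_infty_eq (g : R -> R) (l : R) : Prop :=
  (forall eps, 0 < eps -> exists T, forall t, T <= t -> l - eps < g t) /\
  (forall eps T, 0 < eps -> exists t, T <= t /\ g t < l + eps).

(* limsup_{t -> +oo} g t > c  (limsup in the extended reals) *)
Definition limsup_infty_gt (g : R -> R) (c : R) : Prop :=
  exists c', c < c' /\ forall T, exists t, T <= t /\ c' < g t.

(* limsup_{eps -> 0+} ( limsup_{t -> +oo} F eps t ) > c,
   limsups taken in the extended reals *)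
Definition limsup0_limsup_gt (F : R -> R -> R) (c : R) : Prop :=
  exists c', c < c' /\
    forall d, 0 < d -> exists eps, 0 < eps < d /\ limsup_infty_gt (F eps) c'.

(* x is a solution of (E):  x' (t) + sum_i p_i(t) x(tau_i(t)) = 0.
   T0 is the initial point, T1 = tau_{(-1)}(T0) = sup {s >= t0 : tau(s) <= T0}. *)
Definition is_solution (m : nat) (t0 : R) (p tau : nat -> R -> R)
    (x : R -> R) : Prop :=
  exists T0 T1,
    t0 <= T0 /\
    is_lub (fun s => t0 <= s /\ tau_min m tau s <= T0) T1 /\
    (forall t, T0 <= t -> continuity_pt x t) /\
    (forall t, T1 < t ->
       derivable_pt_lim x t (- sumR m (fun i => p i t * x (tau i t)))).

Definition oscillatory (x : R -> R) : Prop :=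
  forall T, exists t, T <= t /\ x t = 0.

Definition thm32_expr (m : nat) (p tau sigma : nat -> R -> R)
    (lam : nat -> R) (eps t : R) : R :=
  prodR m (fun j =>
    rootR m (prodR m (fun i =>
      Rint (fun s => p i s *
              exp (Rint (fun xi => sumR m (fun k => (lam k - eps) * p k xi))
                        (tau i s) (sigma i t)))
           (sigma j t) t))).

(* Main.v *)
Require Import Defs.
From Stdlib Require Import Reals Lra Lia ClassicalEpsilon Classical.
From Coquelicot Require Import Coquelicot.
Open Scope R_scope.

Lemma Rint_cases f a b :
  (ex_RInt f a b /\ Rint f a b = RInt f a b) \/ Rint f a b = 0.
Proof.
  unfold Rint. destruct (excluded_middle_informative _) as [h|h]; [left|right; reflexivity].
  split. destruct h as [pr]. now apply ex_RInt_Reals_1.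
  rewrite (RInt_Reals f a b (epsilon h (fun _ => True))). reflexivity.
Qed.

Lemma Rint_RInt f a b : ex_RInt f a b -> Rint f a b = RInt f a b.
Proof.
  intros H. unfold Rint. destruct (excluded_middle_informative _) as [h|h].
  - rewrite (RInt_Reals f a b (epsilon h (fun _ => True))). reflexivity.
  - exfalso. apply h. constructor. now apply ex_RInt_Reals_0.
Qed.

Lemma Rint_ge0 f a b : a <= b -> (forall x, a <= x <= b -> 0 <= f x) -> 0 <= Rint f a b.
Proof.
  intros Hab Hf. destruct (Rint_cases f a b) as [[H1 H2]|H]; [|lra].
  rewrite H2. apply RInt_ge_0; auto. intros; apply Hf; lra.
Qed.

Lemma cpt f x : continuity_pt f x -> continuous f x.
Proof. intros H. now apply continuity_pt_filterlim. Qed.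

Lemma sumR_le n f g : (forall i, (i < n)%nat -> f i <= g i) -> sumR n f <= sumR n g.
Proof. induction n; simpl; intros H. lra. assert (f n <= g n) by (apply H; lia).
  assert (sumR n f <= sumR n g) by (apply IHn; intros; apply H; lia). lra. Qed.

Lemma sumR_ge0 n f : (forall i, (i < n)%nat -> 0 <= f i) -> 0 <= sumR n f.
Proof. induction n; simpl; intros H. lra.
  assert (0 <= sumR n f) by (apply IHn; intros; apply H; lia).
  assert (0 <= f n) by (apply H; lia). lra. Qed.

Lemma sumR_ext n f g : (forall i, (i < n)%nat -> f i = g i) -> sumR n f = sumR n g.
Proof. induction n; simpl; intros H; auto. f_equal; [apply IHn; intros; apply H; lia | apply H; lia]. Qed.

Lemma sumR_plus n f g : sumR n (fun i => f i + g i) = sumR n f + sumR n g.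
Proof. induction n; simpl. lra. rewrite IHn; lra. Qed.

Lemma sumR_scal n c f : sumR n (fun i => c * f i) = c * sumR n f.
Proof. induction n; simpl. lra. rewrite IHn; lra. Qed.

Lemma sumR_const n c : sumR n (fun _ => c) = INR n * c.
Proof. induction n. simpl. lra. cbn [sumR]. rewrite IHn. rewrite S_INR. lra. Qed.

Lemma sumR_single n f k : (k < n)%nat -> (forall i, (i < n)%nat -> 0 <= f i) -> f k <= sumR n f.
Proof. induction n; intros Hk H. lia. simpl. destruct (Nat.eq_dec k n).
  subst k. assert (0 <= sumR n f) by (apply sumR_ge0; intros; apply H; lia). lra.
  assert (f k <= sumR n f) by (apply IHn; [lia| intros; apply H; lia]).
  assert (0 <= f n) by (apply H; lia). lra. Qed.

Lemma prodR_ext n f g : (forall i, (i < n)%nat -> f i = g i) -> prodR n f = prodR n g.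
Proof. induction n; simpl; intros H; auto. f_equal; [apply IHn; intros; apply H; lia | apply H; lia]. Qed.

Lemma prodR_mul n f g : prodR n (fun i => f i * g i) = prodR n f * prodR n g.
Proof. induction n; simpl. lra. rewrite IHn; lra. Qed.

Lemma prodR_const n c : prodR n (fun _ => c) = c ^ n.
Proof. induction n; simpl. lra. rewrite IHn; lra. Qed.

Lemma prodR_pos n f : (forall i, (i < n)%nat -> 0 < f i) -> 0 < prodR n f.
Proof. induction n; simpl; intros H. lra. apply Rmult_lt_0_compat. apply IHn; intros; apply H; lia. apply H; lia. Qed.

Lemma prodR_ge0 n f : (forall i, (i < n)%nat -> 0 <= f i) -> 0 <= prodR n f.
Proof. induction n; simpl; intros H. lra. apply Rmult_le_pos. apply IHn; intros; apply H; lia. apply H; lia. Qed.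

Lemma prodR_le n f g : (forall i, (i < n)%nat -> 0 <= f i <= g i) -> prodR n f <= prodR n g.
Proof. induction n; simpl; intros H. lra. apply Rmult_le_compat.
  apply prodR_ge0; intros; apply H; lia. apply H; lia. apply IHn; intros; apply H; lia. apply H; lia. Qed.

Lemma prodR_pos_inv n f : (forall i, (i < n)%nat -> 0 <= f i) -> 0 < prodR n f ->
  forall i, (i < n)%nat -> 0 < f i.
Proof. induction n; simpl; intros H Hp i Hi. lia.
  assert (0 <= prodR n f) by (apply prodR_ge0; intros; apply H; lia).
  assert (0 <= f n) by (apply H; lia).
  destruct (Req_dec (f n) 0) as [e|e]. rewrite e in Hp; lra.
  destruct (Req_dec (prodR n f) 0) as [e'|e']. rewrite e' in Hp; lra.
  destruct (Nat.eq_dec i n). subst; lra. apply IHn; try lra. intros; apply H; lia. lia. Qed.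

Lemma ln_prodR n f : (forall i, (i < n)%nat -> 0 < f i) -> ln (prodR n f) = sumR n (fun i => ln (f i)).
Proof. induction n; simpl; intros H. apply ln_1. rewrite ln_mult.
  - rewrite IHn. reflexivity. intros; apply H; lia.
  - apply prodR_pos; intros; apply H; lia.
  - apply H; lia. Qed.
Lemma rootR_nonneg m x : 0 <= rootR m x.
Proof. unfold rootR. destruct (Rle_dec x 0). lra. unfold Rpower. left; apply exp_pos. Qed.

Lemma rootR_pos m x : 0 < x -> rootR m x = Rpower x (/ INR m).
Proof. intros. unfold rootR. destruct (Rle_dec x 0). lra. reflexivity. Qed.

Lemma rootR_mul m a b : 0 < a -> 0 <= b -> rootR m (a * b) = rootR m a * rootR m b.
Proof. intros Ha Hb. destruct (Req_dec b 0) as [e|e].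
  - subst. unfold rootR. rewrite Rmult_0_r. destruct (Rle_dec 0 0); [|lra]. lra.
  - rewrite !rootR_pos; try lra. now rewrite Rpower_mult_distr by lra. apply Rmult_lt_0_compat; lra. Qed.

Lemma rootR_pow m P : (1 <= m)%nat -> 0 < P -> (rootR m P) ^ m = P.
Proof. intros Hm HP. rewrite rootR_pos by auto. rewrite <- Rpower_pow.
  rewrite Rpower_mult. rewrite Rinv_l. apply Rpower_1; auto.
  apply not_0_INR; lia. unfold Rpower; apply exp_pos. Qed.

Lemma amgm m a : (1 <= m)%nat -> (forall i, (i < m)%nat -> 0 <= a i) ->
  INR m * rootR m (prodR m a) <= sumR m a.
Proof.
  intros Hm Ha. unfold rootR. destruct (Rle_dec (prodR m a) 0) as [h|h].
  { rewrite Rmult_0_r. apply sumR_ge0; auto. }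
  assert (HP : 0 < prodR m a) by lra.
  assert (Hai : forall i, (i < m)%nat -> 0 < a i) by (apply prodR_pos_inv; auto).
  set (G := Rpower (prodR m a) (/ INR m)).
  assert (HG : 0 < G) by (unfold G, Rpower; apply exp_pos).
  assert (HlnG : ln G = / INR m * ln (prodR m a)) by (unfold G, Rpower; apply ln_exp).
  assert (Hm0 : 0 < INR m) by (apply lt_0_INR; lia).
  assert (Hs : sumR m (fun i => ln (a i) + - ln G) <= sumR m (fun i => a i * / G + - 1)).
  { apply sumR_le. intros i Hi. specialize (Hai i Hi).
    pose proof (exp_ineq1_le (ln (a i / G))). rewrite exp_ln in H.
    2:{ apply Rdiv_lt_0_compat; lra. }
    rewrite ln_div in H by lra. unfold Rdiv in H. lra. }
  rewrite !sumR_plus, !sumR_const in Hs.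
  rewrite <- ln_prodR in Hs by auto.
  rewrite (sumR_ext m (fun i => a i * / G) (fun i => / G * a i)) in Hs by (intros; lra).
  rewrite sumR_scal in Hs. rewrite HlnG in Hs.
  replace (ln (prodR m a) + INR m * - (/ INR m * ln (prodR m a))) with 0 in Hs by (field; lra).
  fold G.
  assert (INR m <= / G * sumR m a) by lra.
  apply Rmult_le_compat_r with (r := G) in H; [|lra].
  replace (/ G * sumR m a * G) with (sumR m a) in H by (field; lra). lra.
Qed.

Definition Dx (m : nat) (p tau : nat -> R -> R) (x : R -> R) (t : R) : R :=
  - sumR m (fun i => p i t * x (tau i t)).

Definition good m t0 (p tau : nat -> R -> R) (x : R -> R) T2 T3 : Prop :=
  t0 <= T2 <= T3 /\
  (forall t, T3 <= t -> derivable_pt_lim x t (Dx m p tau x t)) /\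
  (forall t, T2 <= t -> 0 < x t) /\
  (forall t, T2 <= t -> continuity_pt x t) /\
  (forall i t, (i<m)%nat -> T3 <= t -> T2 <= tau i t) /\
  (forall i t, (i<m)%nat -> t0 <= t -> continuity_pt (p i) t) /\
  (forall i t, (i<m)%nat -> t0 <= t -> 0 <= p i t) /\
  (forall i t, (i<m)%nat -> t0 <= t -> continuity_pt (tau i) t).

Lemma cont_sumR n (f : nat -> R -> R) t :
  (forall i, (i < n)%nat -> continuity_pt (f i) t) ->
  continuity_pt (fun s => sumR n (fun i => f i s)) t.
Proof. induction n; intros H; simpl.
  - apply continuity_pt_const. intros u v; reflexivity.
  - apply (continuity_pt_plus (fun s => sumR n (fun i => f i s)) (f n)).
    apply IHn; intros; apply H; lia. apply H; lia. Qed.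

Lemma cont_xtau m t0 p tau x T2 T3 i t : good m t0 p tau x T2 T3 -> (i < m)%nat -> T3 <= t ->
  continuity_pt (fun s => x (tau i s)) t.
Proof. intros (H1&H2&H3&H4&H5&H6&H7&H8) Hi Ht.
  apply (continuity_pt_comp (tau i) x). apply H8; auto; lra. apply H4. apply H5; auto. Qed.

Lemma cont_Dx m t0 p tau x T2 T3 t : good m t0 p tau x T2 T3 -> T3 <= t ->
  continuity_pt (Dx m p tau x) t.
Proof. intros G Ht. pose proof G as (H1&H2&H3&H4&H5&H6&H7&H8). unfold Dx.
  apply (continuity_pt_opp (fun s => sumR m (fun i => p i s * x (tau i s)))).
  apply (cont_sumR m (fun i s => p i s * x (tau i s))). intros i Hi.
  apply (continuity_pt_mult (p i) (fun s => x (tau i s))). apply H6; auto; lra.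
  eapply cont_xtau; eauto. Qed.

Lemma claimC m t0 p tau x T2 T3 (q : R -> R) a b : good m t0 p tau x T2 T3 -> T3 <= a <= b ->
  (forall s, a <= s <= b -> continuous q s) ->
  (forall s, a <= s <= b -> Dx m p tau x s <= - q s * x s) ->
  ln (x b) + RInt q a b <= ln (x a).
Proof.
  intros G Hab Hq HD. pose proof G as (H1&H2&H3&H4&H5&H6&H7&H8).
  assert (Hmin : Rmin a b = a) by (apply Rmin_left; lra).
  assert (Hmax : Rmax a b = b) by (apply Rmax_right; lra).
  assert (HI : is_RInt (fun s => Dx m p tau x s / x s) a b (minus (ln (x b)) (ln (x a)))).
  { apply (is_RInt_derive (fun s => ln (x s))); rewrite Hmin, Hmax; intros s Hs.
    - apply is_derive_Reals.
      replace (Dx m p tau x s / x s) with (/ x s * Dx m p tau x s) by (field; apply Rgt_not_eq, H3; lra).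
      apply (derivable_pt_lim_comp x ln). apply H2; lra. apply derivable_pt_lim_ln. apply H3; lra.
    - apply cpt. apply continuity_pt_div. eapply cont_Dx; eauto; lra. apply H4; lra.
      apply Rgt_not_eq, H3; lra. }
  pose proof (is_RInt_unique (V:=R_CompleteNormedModule) _ _ _ _ HI) as HI'.
  assert (Hle : RInt (fun s => Dx m p tau x s / x s) a b <= RInt (fun s => - q s) a b).
  { apply RInt_le. lra. eexists; exact HI.
    apply (ex_RInt_continuous (V:=R_CompleteNormedModule)). rewrite Hmin, Hmax. intros z Hz. apply cpt. apply (continuity_pt_opp q). apply continuity_pt_filterlim. now apply Hq.
    intros s Hs. assert (0 < x s) by (apply H3; lra). specialize (HD s ltac:(lra)).
    apply Rmult_le_reg_r with (x s); auto. unfold Rdiv. rewrite Rmult_assoc, Rinv_l; lra. }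
  rewrite HI' in Hle.
  assert (Ho : RInt (fun s => - q s) a b = - RInt q a b).
  { apply (RInt_opp (V:=R_CompleteNormedModule) q a b). apply (ex_RInt_continuous (V:=R_CompleteNormedModule)). rewrite Hmin, Hmax. auto. }
  rewrite Ho in Hle.
  unfold minus, plus, opp in Hle; simpl in Hle. lra.
Qed.

Lemma exp_le' u v : u <= v -> exp u <= exp v.
Proof. intros [H|H]. left; now apply exp_increasing. subst; lra. Qed.

Lemma lam_math beta lam : 0 < beta <= / exp 1 ->
  exp (beta * lam) = lam -> (forall y, exp (beta * y) = y -> lam <= y) ->
  forall y, 0 <= y < lam -> exists c eta, c < beta /\ 0 < eta /\
    forall z, 0 <= z <= y -> z + eta <= exp (c * z).
Proof.
  intros Hb Hl Hmin.
  set (h := fun z => exp (beta * z) - z).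
  assert (Hc : continuity h) by (unfold h; reg).
  assert (H1 : forall z, 0 <= z < lam -> 0 < h z).
  { intros z Hz. destruct (Rlt_or_le 0 (h z)) as [H|H]; auto. exfalso.
    assert (h 0 = 1) by (unfold h; rewrite Rmult_0_r, exp_0; lra).
    destruct (IVT_cor h 0 z Hc ltac:(lra)) as [r [Hr1 Hr2]].
    { rewrite H0. lra. }
    assert (lam <= r) by (apply Hmin; unfold h in Hr2; lra). lra. }
  assert (He1 : 0 < exp 1) by apply exp_pos.
  assert (Hbe : beta * exp 1 <= 1).
  { destruct Hb as [_ Hb]. apply Rmult_le_compat_r with (r := exp 1) in Hb; [|lra].
    rewrite Rinv_l in Hb; lra. }
  assert (Hlpos : 0 < lam) by (rewrite <- Hl; apply exp_pos).
  assert (H2 : lam <= exp 1).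
  { destruct (Rle_or_lt lam (exp 1)) as [H|H]; auto. exfalso.
    assert (0 < h (exp 1)) by (apply H1; split; lra).
    unfold h in H0. assert (exp (beta * exp 1) <= exp 1) by (apply exp_le'; lra). lra. }
  intros y Hy.
  assert (Hby : beta * exp (beta * y) <= 1).
  { assert (exp (beta * y) <= lam) by (rewrite <- Hl; apply exp_le'; apply Rmult_le_compat_l; lra).
    apply Rle_trans with (beta * exp 1). apply Rmult_le_compat_l; lra. lra. }
  assert (H3 : forall z, 0 <= z <= y -> h y <= h z).
  { intros z Hz. unfold h.
    pose proof (exp_ineq1_le (beta * (z - y))).
    assert (exp (beta * z) = exp (beta * (z - y)) * exp (beta * y)) by (rewrite <- exp_plus; f_equal; ring).
    assert (0 < exp (beta * y)) by apply exp_pos.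
    assert (exp (beta * z) >= (1 + beta * (z - y)) * exp (beta * y)).
    { rewrite H0. apply Rle_ge, Rmult_le_compat_r; lra. }
    assert (beta * exp (beta * y) * (y - z) <= y - z).
    { replace (y - z) with (1 * (y - z)) at 2 by ring. apply Rmult_le_compat_r; lra. }
    nra. }
  set (H := h y). assert (HH : 0 < H) by (apply H1; lra).
  set (K := exp (beta * y) * y + 1).
  assert (HK : 0 < K) by (unfold K; pose proof (exp_pos (beta * y)); nra).
  set (d := H / (2 * K)).
  assert (Hd : 0 < d) by (unfold d; apply Rdiv_lt_0_compat; lra).
  assert (HdK : d * K = H / 2) by (unfold d; field; lra).
  exists (beta - d), (H / 2). split; [lra|]. split; [lra|].
  intros z Hz.
  assert (exp ((beta - d) * z) = exp (beta * z) * exp (- (d * z))) by (rewrite <- exp_plus; f_equal; ring).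
  pose proof (exp_ineq1_le (- (d * z))).
  assert (0 < exp (beta * z)) by apply exp_pos.
  assert (exp (beta * z) <= exp (beta * y)) by (apply exp_le'; apply Rmult_le_compat_l; lra).
  assert (d * z * exp (beta * z) <= d * K).
  { unfold K. assert (z * exp (beta * z) <= y * exp (beta * y)) by (apply Rmult_le_compat; lra). nra. }
  assert (exp ((beta - d) * z) >= exp (beta * z) * (1 - d * z)).
  { rewrite H0. apply Rle_ge, Rmult_le_compat_l; lra. }
  specialize (H3 z Hz). assert (HHv : H = exp (beta * y) - y) by reflexivity.
  unfold h in H3.
  assert (exp (beta * z) * (1 - d * z) = exp (beta * z) - d * z * exp (beta * z)) by ring.
  lra.
Qed.

Lemma eventually_all (m : nat) (P : nat -> R -> Prop) :
  (forall i, (i < m)%nat -> exists T, forall t, T <= t -> P i t) ->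
  exists T, forall i t, (i < m)%nat -> T <= t -> P i t.
Proof. induction m; intros H.
  - exists 0. intros; lia.
  - destruct IHm as [T1 H1]. intros; apply H; lia.
    destruct (H m ltac:(lia)) as [T2 H2]. exists (Rmax T1 T2). intros i t Hi Ht.
    destruct (Nat.eq_dec i m). subst; apply H2. pose proof (Rmax_r T1 T2); lra.
    apply H1. lia. pose proof (Rmax_l T1 T2); lra. Qed.

Lemma stepA m t0 p tau x T2 T3 i a c : good m t0 p tau x T2 T3 -> (i < m)%nat -> 0 <= a ->
  (forall t, t0 <= t -> tau i t <= t) ->
  (forall M, exists T, forall t, T <= t -> M <= tau i t) ->
  (exists S, forall t, S <= t -> a * x t <= x (tau i t)) ->
  (exists S, forall t, S <= t -> c <= Rint (p i) (tau i t) t) ->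
  exists T, forall t, T <= t -> exp (c * a) * x t <= x (tau i t).
Proof.
  intros G Hi Ha Hle Hlim [S HS] [S' HS'].
  pose proof G as (H1&H2&H3&H4&H5&H6&H7&H8).
  destruct (Hlim (Rmax S T3)) as [T'' HT''].
  exists (Rmax T'' (Rmax S' T3)). intros t Ht.
  pose proof (Rmax_l T'' (Rmax S' T3)). pose proof (Rmax_r T'' (Rmax S' T3)).
  pose proof (Rmax_l S' T3). pose proof (Rmax_r S' T3).
  pose proof (Rmax_l S T3). pose proof (Rmax_r S T3).
  set (u := tau i t).
  assert (Hu : Rmax S T3 <= u) by (apply HT''; lra).
  assert (Hut : u <= t) by (apply Hle; lra).
  assert (HC := claimC m t0 p tau x T2 T3 (fun s => a * p i s) u t G ltac:(lra)).
  assert (Hex : ex_RInt (p i) u t).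
  { apply (ex_RInt_continuous (V:=R_CompleteNormedModule)). rewrite Rmin_left, Rmax_right by lra.
    intros z Hz. apply cpt, H6; auto; lra. }
  assert (HR : RInt (fun s => a * p i s) u t = a * RInt (p i) u t).
  { apply (RInt_scal (V:=R_CompleteNormedModule) (p i) u t a Hex). }
  rewrite HR in HC.
  assert (Hc : c <= RInt (p i) u t) by (rewrite <- Rint_RInt by auto; apply HS'; lra).
  assert (Hfin : ln (x t) + a * RInt (p i) u t <= ln (x u)).
  { apply HC.
    - intros s Hs. apply cpt. apply (continuity_pt_scal (p i)). apply H6; auto; lra.
    - intros s Hs. unfold Dx.
      assert (p i s * x (tau i s) <= sumR m (fun k => p k s * x (tau k s))).
      { apply (sumR_single m (fun k => p k s * x (tau k s))); auto. intros k Hk.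
        apply Rmult_le_pos. apply H7; auto; lra. left; apply H3, H5; auto; lra. }
      assert (a * x s <= x (tau i s)) by (apply HS; lra).
      assert (0 <= p i s) by (apply H7; auto; lra).
      assert (p i s * (a * x s) <= p i s * x (tau i s)) by (apply Rmult_le_compat_l; auto).
      lra. }
  assert (Hxt : 0 < x t) by (apply H3; lra).
  assert (Hxu : 0 < x u) by (apply H3; lra).
  assert (Hf2 : ln (x t) + c * a <= ln (x u)) by nra.
  apply exp_le' in Hf2. rewrite exp_plus, exp_ln, exp_ln in Hf2 by auto. lra.
Qed.

Lemma lamA m t0 p tau x T2 T3 i beta lam : good m t0 p tau x T2 T3 -> (i < m)%nat ->
  (forall t, t0 <= t -> tau i t <= t) ->
  (forall M, exists T, forall t, T <= t -> M <= tau i t) ->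
  liminf_infty_eq (fun t => Rint (p i) (tau i t) t) beta -> 0 < beta <= / exp 1 ->
  exp (beta * lam) = lam -> (forall y, exp (beta * y) = y -> lam <= y) ->
  forall y, y < lam -> exists T, forall t, T <= t -> y * x t <= x (tau i t).
Proof.
  intros G Hi Hle Hlim [Hlinf _] Hb Hl Hmin y Hy.
  pose proof G as (H1&H2&H3&H4&H5&H6&H7&H8).
  destruct (Rle_or_lt y 0) as [Hy0|Hy0].
  { exists T3. intros t Ht. assert (0 < x t) by (apply H3; lra).
    assert (0 < x (tau i t)) by (apply H3, H5; auto). nra. }
  destruct (lam_math beta lam Hb Hl Hmin y ltac:(lra)) as [c [eta [Hc [Heta Hz]]]].
  destruct (Hlinf (beta - c) ltac:(lra)) as [S' HS'].
  assert (Hind : forall n, exists T, forall t, T <= t -> Rmin (INR n * eta) y * x t <= x (tau i t)).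
  { induction n.
    - exists T3. intros t Ht. simpl. rewrite Rmult_0_l, Rmin_left by lra.
      assert (0 < x (tau i t)) by (apply H3, H5; auto). lra.
    - set (a := Rmin (INR n * eta) y).
      assert (Ha0 : 0 <= a) by (unfold a; apply Rmin_glb; [apply Rmult_le_pos; [apply pos_INR|lra]|lra]).
      assert (Hay : a <= y) by apply Rmin_r.
      destruct (stepA m t0 p tau x T2 T3 i a c G Hi Ha0 Hle Hlim IHn) as [T HT].
      { exists S'. intros t Ht. specialize (HS' t Ht). simpl in HS'. lra. }
      exists (Rmax T T2). intros t Ht. pose proof (Rmax_l T T2). pose proof (Rmax_r T T2).
      assert (HT' := HT t ltac:(lra)).
      assert (0 < x t) by (apply H3; lra).
      assert (Rmin (INR (S n) * eta) y <= exp (c * a)).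
      { apply Rle_trans with (a + eta). 2: apply Hz; lra.
        rewrite S_INR, Rmult_plus_distr_r, Rmult_1_l. unfold a, Rmin.
        repeat destruct Rle_dec; lra. }
      assert (0 <= Rmin (INR (S n) * eta) y).
      { apply Rmin_glb; [apply Rmult_le_pos; [apply pos_INR|lra]|lra]. }
      apply Rle_trans with (exp (c * a) * x t); auto. apply Rmult_le_compat_r; lra. }
  destruct (INR_archimed eta y ltac:(lra)) as [n Hn].
  destruct (Hind n) as [T HT]. exists T. intros t Ht. specialize (HT t Ht).
  rewrite Rmin_right in HT by lra. exact HT.
Qed.

Lemma is_RInt_sumR n (f : nat -> R -> R) a b :
  (forall i, (i < n)%nat -> ex_RInt (f i) a b) ->
  is_RInt (fun s => sumR n (fun i => f i s)) a b (sumR n (fun i => RInt (f i) a b)).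
Proof. induction n; intros H; simpl.
  - pose proof (is_RInt_const (V:=R_NormedModule) a b 0).
    change (scal (b - a) (0:R)) with (Rmult (b - a) 0) in H0. rewrite Rmult_0_r in H0. exact H0.
  - apply (is_RInt_plus (V:=R_NormedModule) (fun s => sumR n (fun i => f i s)) (f n)).
    apply IHn; intros; apply H; lia.
    apply (RInt_correct (V:=R_CompleteNormedModule)). apply H; lia. Qed.

Lemma RInt_sumR n (f : nat -> R -> R) a b :
  (forall i, (i < n)%nat -> ex_RInt (f i) a b) ->
  RInt (fun s => sumR n (fun i => f i s)) a b = sumR n (fun i => RInt (f i) a b).
Proof. intros H. apply (is_RInt_unique (V:=R_CompleteNormedModule)). now apply is_RInt_sumR. Qed.

Lemma RInt_scal' (f : R -> R) a b c : ex_RInt f a b -> RInt (fun s => c * f s) a b = c * RInt f a b.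
Proof. intros H. apply (RInt_scal (V:=R_CompleteNormedModule) f a b c H). Qed.

Lemma no_pos (m : nat) (t0 : R) (p tau : nat -> R -> R)
  (beta lam : nat -> R) (sigma : nat -> R -> R) (x : R -> R) T2 T3
  (Hm : (1 <= m)%nat)
  (Htau_le : forall i t, (i < m)%nat -> t0 <= t -> tau i t <= t)
  (Htau_lim : forall i, (i < m)%nat ->
     forall M, exists T, forall t, T <= t -> M <= tau i t)
  (Hbeta : forall i, (i < m)%nat ->
     liminf_infty_eq (fun t => Rint (p i) (tau i t) t) (beta i) /\
     0 < beta i <= / exp 1)
  (Hlam : forall i, (i < m)%nat ->
     exp (beta i * lam i) = lam i /\
     forall y, exp (beta i * y) = y -> lam i <= y)
  (Hsig_mono : forall i s t, (i < m)%nat -> t0 <= s -> s <= t ->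
     sigma i s <= sigma i t)
  (Hsig_bounds : forall i t, (i < m)%nat -> t0 <= t ->
     tau i t <= sigma i t <= t)
  (Hmain : limsup0_limsup_gt (thm32_expr m p tau sigma lam)
             (/ (INR m ^ m)))
  (G : good m t0 p tau x T2 T3) : False.
Proof.
  destruct Hmain as [c' [Hc' Hd]]. destruct (Hd 1 Rlt_0_1) as [eps [[Heps _] Hls]].
  pose proof G as (H1&H2&H3&H4&H5&H6&H7&H8).
  assert (HT4 : exists T, forall k t, (k < m)%nat -> T <= t -> (lam k - eps) * x t <= x (tau k t)).
  { apply (eventually_all m (fun k t => (lam k - eps) * x t <= x (tau k t))). intros k Hk.
    destruct (Hbeta k Hk) as [Hl Hb]. destruct (Hlam k Hk) as [Hl1 Hl2].
    eapply (lamA m t0 p tau x T2 T3 k (beta k) (lam k)); eauto. lra. }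
  destruct HT4 as [T4 HT4]. set (T4' := Rmax T4 T3).
  assert (HT4a : T4 <= T4') by apply Rmax_l. assert (HT4b : T3 <= T4') by apply Rmax_r.
  set (q := fun s => sumR m (fun k => (lam k - eps) * p k s)).
  assert (Hqc : forall s, t0 <= s -> continuous q s).
  { intros s Hs. apply cpt. unfold q.
    apply (cont_sumR m (fun k s => (lam k - eps) * p k s)). intros k Hk.
    apply (continuity_pt_scal (p k)). apply H6; auto. }
  assert (HD : forall a b, T4' <= a <= b -> x b * exp (Rint q a b) <= x a).
  { intros a b Hab.
    assert (Hex : ex_RInt q a b).
    { apply (ex_RInt_continuous (V:=R_CompleteNormedModule)). rewrite Rmin_left, Rmax_right by lra.
      intros z Hz. apply Hqc. lra. }
    rewrite Rint_RInt by auto.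
    assert (Hc : ln (x b) + RInt q a b <= ln (x a)).
    { apply (claimC m t0 p tau x T2 T3 q a b G). lra. intros s Hs; apply Hqc; lra.
      intros s Hs. unfold Dx.
      assert (q s * x s = sumR m (fun k => x s * ((lam k - eps) * p k s))) by (rewrite sumR_scal; unfold q; ring).
      assert (sumR m (fun k => x s * ((lam k - eps) * p k s)) <= sumR m (fun k => p k s * x (tau k s))).
      { apply sumR_le. intros k Hk.
        assert (0 <= p k s) by (apply H7; auto; lra).
        assert ((lam k - eps) * x s <= x (tau k s)) by (apply HT4; auto; lra).
        assert (p k s * ((lam k - eps) * x s) <= p k s * x (tau k s)) by (apply Rmult_le_compat_l; auto).
        lra. }
      lra. }
    assert (0 < x a) by (apply H3; lra). assert (0 < x b) by (apply H3; lra).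
    apply exp_le' in Hc. rewrite exp_plus, !exp_ln in Hc by auto. lra. }
  assert (HT6 : exists T, forall i s, (i < m)%nat -> T <= s -> T4' <= tau i s).
  { apply (eventually_all m (fun i s => T4' <= tau i s)). intros i Hi. apply Htau_lim; auto. }
  destruct HT6 as [T6 HT6]. set (T6' := Rmax T6 T4').
  assert (HT6a : T6 <= T6') by apply Rmax_l. assert (HT6b : T4' <= T6') by apply Rmax_r.
  assert (HT5 : exists T, forall i s, (i < m)%nat -> T <= s -> T6' <= tau i s).
  { apply (eventually_all m (fun i s => T6' <= tau i s)). intros i Hi. apply Htau_lim; auto. }
  destruct HT5 as [T5 HT5]. set (T5' := Rmax T5 T6').
  assert (HT5a : T5 <= T5') by apply Rmax_l. assert (HT5b : T6' <= T5') by apply Rmax_r.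
  assert (Hbound : forall t, T5' <= t -> thm32_expr m p tau sigma lam eps t <= / (INR m ^ m)).
  { intros t Ht.
    assert (Ht0 : t0 <= t) by lra.
    assert (Hsj : forall j, (j < m)%nat -> T6' <= sigma j t /\ sigma j t <= t).
    { intros j Hj. pose proof (HT5 j t Hj ltac:(lra)). pose proof (Hsig_bounds j t Hj Ht0). lra. }
    set (X := fun i => x (sigma i t)).
    assert (HX : forall i, (i < m)%nat -> 0 < X i).
    { intros i Hi. unfold X. apply H3. pose proof (Hsj i Hi); lra. }
    set (A := fun i j => Rint (fun s => p i s * exp (Rint q (tau i s) (sigma i t))) (sigma j t) t).
    assert (E : thm32_expr m p tau sigma lam eps t = prodR m (fun j => rootR m (prodR m (fun i => A i j)))) by reflexivity.
    assert (HA0 : forall i j, (i < m)%nat -> (j < m)%nat -> 0 <= A i j).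
    { intros i j Hi Hj. unfold A. apply Rint_ge0. apply Hsj; auto.
      intros s Hs. pose proof (Hsj j Hj). apply Rmult_le_pos. apply H7; auto; lra. left; apply exp_pos. }
    assert (Hsum : forall j, (j < m)%nat -> sumR m (fun i => X i * A i j) <= X j).
    { intros j Hj. destruct (Hsj j Hj) as [Ha1 Ha2]. set (a := sigma j t) in *.
      set (f := fun i s => p i s * x (tau i s)).
      assert (Hexf : forall i, (i < m)%nat -> ex_RInt (f i) a t).
      { intros i Hi. apply (ex_RInt_continuous (V:=R_CompleteNormedModule)).
        rewrite Rmin_left, Rmax_right by lra. intros z Hz. apply cpt. unfold f.
        apply (continuity_pt_mult (p i) (fun s => x (tau i s))). apply H6; auto; lra.
        eapply cont_xtau; eauto; lra. }
      assert (HIs := is_RInt_sumR m f a t Hexf).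
      assert (HFT : is_RInt (Dx m p tau x) a t (minus (x t) (x a))).
      { apply (is_RInt_derive (V:=R_CompleteNormedModule) x); rewrite Rmin_left, Rmax_right by lra; intros s Hs.
        apply is_derive_Reals. apply H2; lra. apply cpt. eapply cont_Dx; eauto; lra. }
      assert (HFT2 : is_RInt (fun s => opp (sumR m (fun i => f i s))) a t (opp (sumR m (fun i => RInt (f i) a t)))).
      { apply (is_RInt_opp (V:=R_NormedModule)). exact HIs. }
      assert (HEq : minus (x t) (x a) = opp (sumR m (fun i => RInt (f i) a t))).
      { apply (is_RInt_unique (V:=R_CompleteNormedModule)) in HFT.
        apply (is_RInt_unique (V:=R_CompleteNormedModule)) in HFT2.
        rewrite <- HFT, <- HFT2. reflexivity. }
      unfold minus, plus, opp in HEq; simpl in HEq.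
      assert (HxT : 0 < x t) by (apply H3; lra).
      assert (sumR m (fun i => X i * A i j) <= sumR m (fun i => RInt (f i) a t)).
      { apply sumR_le. intros i Hi.
        assert (Hpt : forall s, a <= s <= t -> X i * (p i s * exp (Rint q (tau i s) (sigma i t))) <= f i s).
        { intros s Hs. unfold f, X.
          assert (0 <= p i s) by (apply H7; auto; lra).
          assert (T4' <= tau i s) by (apply HT6; auto; lra).
          assert (tau i s <= sigma i s) by (apply Hsig_bounds; auto; lra).
          assert (sigma i s <= sigma i t) by (apply Hsig_mono; auto; lra).
          assert (x (sigma i t) * exp (Rint q (tau i s) (sigma i t)) <= x (tau i s)) by (apply HD; lra).
          replace (x (sigma i t) * (p i s * exp (Rint q (tau i s) (sigma i t))))
            with (p i s * (x (sigma i t) * exp (Rint q (tau i s) (sigma i t)))) by ring.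
          apply Rmult_le_compat_l; auto. }
        unfold A. fold a.
        destruct (Rint_cases (fun s => p i s * exp (Rint q (tau i s) (sigma i t))) a t) as [[Hex He]|He];
          rewrite He.
        - rewrite <- RInt_scal' by auto. apply RInt_le; [lra| |auto|].
          apply (ex_RInt_scal (V:=R_NormedModule)) with (k := X i) in Hex. exact Hex.
          intros s Hs. apply Hpt; lra.
        - rewrite Rmult_0_r. apply RInt_ge_0; [lra|auto|]. intros s Hs. unfold f.
          apply Rmult_le_pos. apply H7; auto; lra. left. apply H3, H5; auto; lra. }
      unfold X at 2. fold a. lra. }
    set (PX := prodR m X).
    assert (HPX : 0 < PX) by (apply prodR_pos; auto).
    set (R0 := rootR m PX).
    assert (HR0 : 0 < R0) by (unfold R0; rewrite rootR_pos by auto; unfold Rpower; apply exp_pos).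
    set (B := fun j => rootR m (prodR m (fun i => A i j))).
    assert (HB : forall j, (j < m)%nat -> 0 <= INR m * R0 * B j <= X j).
    { intros j Hj. split.
      - apply Rmult_le_pos. apply Rmult_le_pos. apply pos_INR. lra. apply rootR_nonneg.
      - pose proof (amgm m (fun i => X i * A i j) Hm) as Ham.
        assert (Hnn : forall i, (i < m)%nat -> 0 <= X i * A i j).
        { intros i Hi. apply Rmult_le_pos. left; auto. auto. }
        specialize (Ham Hnn). rewrite prodR_mul, rootR_mul in Ham; auto.
        2:{ apply prodR_ge0. intros; auto. }
        specialize (Hsum j Hj). fold PX R0 in Ham. unfold B. lra. }
    apply prodR_le in HB.
    rewrite prodR_mul, prodR_const, Rpow_mult_distr in HB.
    unfold R0 in HB. rewrite rootR_pow in HB by auto. fold PX in HB.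
    rewrite E. fold B.
    assert (Hmm : 0 < INR m ^ m) by (apply pow_lt, lt_0_INR; lia).
    assert (INR m ^ m * prodR m B <= 1).
    { apply Rmult_le_reg_r with PX; auto. lra. }
    apply Rmult_le_reg_l with (INR m ^ m); auto. rewrite Rinv_r; lra. }
  destruct Hls as [c'' [Hc'' Hls]]. destruct (Hls T5') as [t [Ht Hgt]].
  specialize (Hbound t Ht). lra.
Qed.

Lemma no_pos_x (m : nat) (t0 : R) (p tau : nat -> R -> R)
  (beta lam : nat -> R) (sigma : nat -> R -> R) (x : R -> R) T0 T1 Ta
  (Hm : (1 <= m)%nat)
  (Hp_cont : forall i t, (i < m)%nat -> t0 <= t -> continuity_pt (p i) t)
  (Hp_nonneg : forall i t, (i < m)%nat -> t0 <= t -> 0 <= p i t)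
  (Htau_cont : forall i t, (i < m)%nat -> t0 <= t -> continuity_pt (tau i) t)
  (Htau_le : forall i t, (i < m)%nat -> t0 <= t -> tau i t <= t)
  (Htau_lim : forall i, (i < m)%nat ->
     forall M, exists T, forall t, T <= t -> M <= tau i t)
  (Hbeta : forall i, (i < m)%nat ->
     liminf_infty_eq (fun t => Rint (p i) (tau i t) t) (beta i) /\
     0 < beta i <= / exp 1)
  (Hlam : forall i, (i < m)%nat ->
     exp (beta i * lam i) = lam i /\
     forall y, exp (beta i * y) = y -> lam i <= y)
  (Hsig_mono : forall i s t, (i < m)%nat -> t0 <= s -> s <= t ->
     sigma i s <= sigma i t)
  (Hsig_bounds : forall i t, (i < m)%nat -> t0 <= t ->
     tau i t <= sigma i t <= t)
  (Hmain : limsup0_limsup_gt (thm32_expr m p tau sigma lam)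
             (/ (INR m ^ m)))
  (HT0 : t0 <= T0) (HTa : T0 <= Ta)
  (Hxc : forall t, T0 <= t -> continuity_pt x t)
  (Hxd : forall t, T1 < t ->
       derivable_pt_lim x t (- sumR m (fun i => p i t * x (tau i t))))
  (Hpos : forall t, Ta <= t -> 0 < x t) : False.
Proof.
  destruct (eventually_all m (fun i t => Ta <= tau i t)) as [T3 HT3].
  { intros i Hi. apply Htau_lim; auto. }
  pose proof (Rmax_l T3 (Rmax (T1 + 1) Ta)). pose proof (Rmax_r T3 (Rmax (T1 + 1) Ta)).
  pose proof (Rmax_l (T1 + 1) Ta). pose proof (Rmax_r (T1 + 1) Ta).
  set (T3' := Rmax T3 (Rmax (T1 + 1) Ta)) in *.
  apply (no_pos m t0 p tau beta lam sigma x Ta T3'); auto.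
  unfold good. split; [lra|]. split; [|split; [|split; [|split]]]; auto.
  - intros t Ht. apply Hxd. lra.
  - intros t Ht. apply Hxc. lra.
  - intros i t Hi Ht. apply HT3; auto. lra.
Qed.

Lemma minR_le0 n f : minR n f <= f O.
Proof. induction n; simpl. lra. pose proof (Rmin_l (minR n f) (f (S n))). lra. Qed.

Theorem theorem3p2 (m : nat) (t0 : R) (p tau : nat -> R -> R)
  (beta lam : nat -> R) (sigma : nat -> R -> R)
  (Hm : (1 <= m)%nat)
  (Hp_cont : forall i t, (i < m)%nat -> t0 <= t -> continuity_pt (p i) t)
  (Hp_nonneg : forall i t, (i < m)%nat -> t0 <= t -> 0 <= p i t)
  (Htau_cont : forall i t, (i < m)%nat -> t0 <= t -> continuity_pt (tau i) t)
  (Htau_nonneg : forall i t, (i < m)%nat -> t0 <= t -> 0 <= tau i t)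
  (Htau_le : forall i t, (i < m)%nat -> t0 <= t -> tau i t <= t)
  (Htau_lim : forall i, (i < m)%nat ->
     forall M, exists T, forall t, T <= t -> M <= tau i t)
  (Hbeta : forall i, (i < m)%nat ->
     liminf_infty_eq (fun t => Rint (p i) (tau i t) t) (beta i) /\
     0 < beta i <= / exp 1)
  (Hlam : forall i, (i < m)%nat ->
     exp (beta i * lam i) = lam i /\
     forall y, exp (beta i * y) = y -> lam i <= y)
  (Hsig_cont : forall i t, (i < m)%nat -> t0 <= t -> continuity_pt (sigma i) t)
  (Hsig_mono : forall i s t, (i < m)%nat -> t0 <= s -> s <= t ->
     sigma i s <= sigma i t)
  (Hsig_bounds : forall i t, (i < m)%nat -> t0 <= t ->
     tau i t <= sigma i t <= t)
  (Hmain : limsup0_limsup_gt (thm32_expr m p tau sigma lam)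
             (/ (INR m ^ m))) :
  forall x : R -> R, is_solution m t0 p tau x -> oscillatory x.
Proof.
  intros x [T0 [T1 [HT0 [Hlub [Hxc Hxd]]]]] T.
  destruct (classic (exists t, T <= t /\ x t = 0)) as [H|H]; auto. exfalso.
  assert (Hnz : forall t, T <= t -> x t <> 0).
  { intros t Ht He. apply H. exists t. auto. }
  pose proof (Rmax_l T T0). pose proof (Rmax_r T T0). set (Ta := Rmax T T0) in *.
  assert (Hxa : x Ta <> 0) by (apply Hnz; lra).
  destruct (Rlt_or_le 0 (x Ta)) as [Hp|Hn].
  - apply (no_pos_x m t0 p tau beta lam sigma x T0 T1 Ta); auto.
    intros t Ht. destruct (Rlt_or_le 0 (x t)) as [h|h]; auto. exfalso.
    assert (x t <> 0) by (apply Hnz; lra).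
    assert (Hlt : Ta < t) by (destruct (Req_dec Ta t); [subst; lra|lra]).
    destruct (Ranalysis5.IVT_interv (fun u => - x u) Ta t) as [z [Hz1 Hz2]]; auto; try lra.
    intros a Ha. apply (continuity_pt_opp x). apply Hxc; lra.
    apply (Hnz z); lra.
  - apply (no_pos_x m t0 p tau beta lam sigma (fun u => - x u) T0 T1 Ta); auto.
    + intros t Ht. apply (continuity_pt_opp x). auto.
    + intros t Ht. specialize (Hxd t Ht).
      apply derivable_pt_lim_opp in Hxd.
      replace (- sumR m (fun i => p i t * - x (tau i t))) with (- - sumR m (fun i => p i t * x (tau i t))).
      exact Hxd.
      rewrite (sumR_ext m (fun i => p i t * - x (tau i t)) (fun i => -1 * (p i t * x (tau i t)))) by (intros; ring).
      rewrite sumR_scal. ring.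
    + intros t Ht. destruct (Rlt_or_le 0 (- x t)) as [h|h]; auto. exfalso.
      assert (x t <> 0) by (apply Hnz; lra).
      assert (Hlt : Ta < t) by (destruct (Req_dec Ta t); [subst; lra|lra]).
      destruct (Ranalysis5.IVT_interv x Ta t) as [z [Hz1 Hz2]]; auto; try lra.
      intros a Ha. apply Hxc; lra.
      apply (Hnz z); lra.
Qed.
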